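(* Let $\mathcal H$ be a separable complex Hilbert space, $A\in L(\mathcal H)^+$, and let $T\in L(\mathcal H)$ satisfy $AT^2=AT$. The following are equivalent: (1) $AT=T^*A$; (2) $R(I-T)\subseteq R(AT)^\perp$; (3) $T^*AT\le A$.
   Context: $L(\mathcal H)^+$ denotes positive (semidefinite) bounded operators on $\mathcal H$; $R(\cdot)$ denotes range; $\le$ is the usual order of selfadjoint operators. *)

(* Defs.v *)
From HB Require Import structures.
From mathcomp Require Import all_boot all_order all_algebra.
From mathcomp Require Import reals.
From mathcomp Require Import complex.
Set Implicit Arguments. Unset Strict Implicit. Unset Printing Implicit Defensive.
Import Order.TTheory GRing.Theory Num.Theory.
Local Open Scope ring_scope.

Section Hilbert.
Variables (R : realType) (V : lmodType R[i]) (ip : V -> V -> R[i]).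

Definition is_inner_product : Prop :=
  [/\ forall a x y z, ip (a *: x + y) z = a * ip x z + ip y z,
      forall x y, ip y x = (ip x y)^*,
      forall x, 0 <= ip x x
    & forall x, ip x x = 0 -> x = 0].

Definition ipnorm (x : V) : R := Num.sqrt (complex.Re (ip x x)).

Definition ip_cauchy (u : nat -> V) : Prop :=
  forall e : R, 0 < e -> exists N : nat,
    forall m n, (N <= m)%N -> (N <= n)%N -> ipnorm (u m - u n) < e.

Definition ip_converges (u : nat -> V) (l : V) : Prop :=
  forall e : R, 0 < e -> exists N : nat,
    forall n, (N <= n)%N -> ipnorm (u n - l) < e.

Definition ip_complete : Prop :=
  forall u, ip_cauchy u -> exists l, ip_converges u l.

Definition ip_separable : Prop :=
  exists d : nat -> V, forall x (e : R), 0 < e -> exists n, ipnorm (x - d n) < e.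

Definition separable_hilbert : Prop :=
  [/\ is_inner_product, ip_complete & ip_separable].

Definition bounded_op (T : V -> V) : Prop :=
  exists M : R, forall x, ipnorm (T x) <= M * ipnorm x.

Definition is_adjoint (T Ts : V -> V) : Prop :=
  forall x y, ip (T x) y = ip x (Ts y).

Definition positive_op (A : V -> V) : Prop :=
  forall x, 0 <= ip (A x) x.

Definition op_le (B A : V -> V) : Prop :=
  forall x, 0 <= ip (A x - B x) x.

Definition op_range (T : V -> V) : V -> Prop := fun y => exists x, y = T x.

Definition orth (S : V -> Prop) : V -> Prop :=
  fun y => forall z, S z -> ip z y = 0.

End Hilbert.

(* Main.v *)
Require Import Defs.
From HB Require Import structures.
From mathcomp Require Import all_boot all_order all_algebra.
From mathcomp Require Import reals.
From mathcomp Require Import complex.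
From mathcomp Require Import ring.
Import Order.TTheory GRing.Theory Num.Theory.
Local Open Scope ring_scope.

Section Gen.
Variables (C : numClosedFieldType) (V : lmodType C) (ip : V -> V -> C).
Hypothesis ipL : forall a x y z, ip (a *: x + y) z = a * ip x z + ip y z.
Hypothesis ipC : forall x y, ip y x = (ip x y)^*.
Hypothesis ipP : forall x, 0 <= ip x x.
Hypothesis ipD : forall x, ip x x = 0 -> x = 0.

Lemma ip0l z : ip 0 z = 0.
Proof.
have := ipL 1 0 0 z; rewrite scaler0 addr0 mul1r => h.
by have := congr1 (fun t => t - ip 0 z) h; rewrite subrr addrK.
Qed.
Lemma ipDl x y z : ip (x + y) z = ip x z + ip y z.
Proof. by rewrite -[x + y](congr1 (fun t => t + y) (scale1r x)) ipL mul1r. Qed.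
Lemma ipZl a x z : ip (a *: x) z = a * ip x z.
Proof. by rewrite -[a *: x]addr0 ipL ip0l addr0. Qed.
Lemma ipNl x z : ip (- x) z = - ip x z.
Proof. by rewrite -scaleN1r ipZl mulN1r. Qed.
Lemma ipBl x y z : ip (x - y) z = ip x z - ip y z.
Proof. by rewrite ipDl ipNl. Qed.
Lemma ipDr x y z : ip z (x + y) = ip z x + ip z y.
Proof. by rewrite ipC ipDl rmorphD (ipC x z) (ipC y z). Qed.
Lemma ipZr a x z : ip z (a *: x) = a^* * ip z x.
Proof. by rewrite ipC ipZl rmorphM (ipC x z). Qed.
Lemma ipNr x z : ip z (- x) = - ip z x.
Proof. by rewrite ipC ipNl rmorphN (ipC x z). Qed.
Lemma ipBr x y z : ip z (x - y) = ip z x - ip z y.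
Proof. by rewrite ipDr ipNr. Qed.
Lemma ip0r z : ip z 0 = 0.
Proof. by rewrite ipC ip0l rmorph0. Qed.
Lemma ipext u v : (forall x, ip u x = ip v x) -> u = v.
Proof.
move=> h; apply/eqP; rewrite -subr_eq0; apply/eqP; apply: ipD.
by rewrite ipBl h subrr.
Qed.

Lemma real_ge0 (c : C) : 0 <= c -> c^* = c.
Proof. by move=> h; apply: conj_Creal; apply: ger0_real. Qed.

Lemma alg2 (X Y a b c d : C) :
  X + a + c + Y = X + b + d + Y ->
  X + 'i^* * a + 'i * c + 'i * 'i^* * Y = X + 'i^* * b + 'i * d + 'i * 'i^* * Y ->
  a = b.
Proof.
rewrite conjCi => e1 e2.
have e1' : a + c = b + d.
  apply/eqP; rewrite -subr_eq0; apply/eqP.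
  have -> : a + c - (b + d) = (X + a + c + Y) - (X + b + d + Y) by ring.
  by rewrite e1 subrr.
have e2' : 'i * (c - a) = 'i * (d - b).
  apply/eqP; rewrite -subr_eq0; apply/eqP.
  have -> : 'i * (c - a) - 'i * (d - b) = (X + - 'i * a + 'i * c + 'i * - 'i * Y) - (X + - 'i * b + 'i * d + 'i * - 'i * Y) by ring.
  by rewrite e2 subrr.
have e3 : c - a = d - b by apply: (mulfI (neq0Ci C)).
have h2 : (2 : C) != 0 by rewrite pnatr_eq0.
have -> : a = ((a + c) - (c - a)) / 2 by field.
by rewrite e1' e3; field.
Qed.

Variables (A T Ts : {linear V -> V}).
Hypothesis hpos : forall x, 0 <= ip (A x) x.
Hypothesis hadj : forall x y, ip (T x) y = ip x (Ts y).
Hypothesis hTT : forall x, A (T (T x)) = A (T x).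

Lemma Areal x : ip (A x) x = ip x (A x).
Proof. by rewrite [RHS]ipC real_ge0. Qed.

Lemma Asa x y : ip (A x) y = ip x (A y).
Proof.
apply: (@alg2 (ip (A x) x) (ip (A y) y) _ _ (ip (A y) x) (ip y (A x))).
  have := Areal (x + y); rewrite !linearD /= !ipDl !ipDr.
  rewrite (Areal x) (Areal y) => e.
  by move: e; rewrite !addrA => ->; rewrite -!addrA [ip x (A y) + _]addrC.
have := Areal (x + 'i *: y); rewrite !linearD !linearZ /= !ipDl !ipDr !ipZl !ipZr.
rewrite (Areal x) (Areal y) !mulrA => e.
by move: e; rewrite !addrA.
Qed.

Lemma TsL x y : ip (Ts y) x = ip y (T x).
Proof. by rewrite [LHS]ipC -hadj (ipC (T x) y). Qed.

Lemma ATsub x : A (T (x - T x)) = 0.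
Proof. by rewrite linearB /= linearB /= hTT subrr. Qed.

Definition P1 := forall x, A (T x) = Ts (A x).
Definition P2 := forall w x, ip (A (T w)) (x - T x) = 0.
Definition P3 := forall x, 0 <= ip (A x - Ts (A (T x))) x.

Lemma p12 : P1 -> P2.
Proof.
move=> h w x; rewrite ipBr -TsL -h hTT subrr //.
Qed.

Lemma p21 : P2 -> P1.
Proof.
move=> h.
have h' : forall w x, ip (A (T w)) x = ip (A (T w)) (T x).
  by move=> w x; apply/eqP; rewrite -subr_eq0 -ipBr h.
have hs : forall z, Ts (A (T z)) = A (T z).
  by move=> z; apply: ipext => x; rewrite TsL -h'.
move=> z; apply: ipext => x.
by rewrite h' Asa hadj hs TsL Asa.
Qed.

Lemma p23 : P2 -> P3.
Proof.
move=> h x.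
have k1 : ip (A (T x)) x = ip (A (T x)) (T x).
  by apply/eqP; rewrite -subr_eq0 -ipBr h.
have k2 : ip (A x) (T x) = ip (A (T x)) (T x).
  by rewrite Asa ipC k1 (@real_ge0 _ (hpos (T x))).
have e : ip (A x - Ts (A (T x))) x = ip (A (x - T x)) (x - T x).
  rewrite linearB /= !ipBl !ipBr TsL k1 k2; ring.
by rewrite e.
Qed.


Lemma key (c d : C) : 0 <= d ->
  (- (c / (d + 1)))^* * c + (- (c / (d + 1))) * c^* + (- (c / (d + 1))) * (- (c / (d + 1)))^* * d
  = - (c * c^* * ((d + 2) / ((d + 1) * (d + 1)))).
Proof.
move=> hd.
have hd1 : 0 < d + 1 by apply: ltr_wpDl hd ltr01.
have hd1' : d + 1 != 0 by rewrite lt0r_neq0.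
rewrite rmorphN rmorphM fmorphV rmorphD rmorph1.
have -> : Num.Num_conj__canonical__GRing_RMorphism C d = d by exact: (@real_ge0 _ hd).
change (Num.Num_conj__canonical__GRing_RMorphism C c) with c^*.
by field.
Qed.

Lemma p32 : P3 -> P2.
Proof.
move=> h z x.
have hu : A (T (x - T x)) = 0 := ATsub x.
move: hu.
set u := x - T x => hu; clearbody u.
set c := ip (A (T z)) u.
set d := ip (A u) u.
set s := - (c / (d + 1)).
have E : ip (A (T z + s *: u) - Ts (A (T (T z + s *: u)))) (T z + s *: u)
    = s^* * c + s * c^* + s * s^* * d.
  rewrite ipBl TsL !linearD !linearZ /= hu scaler0 addr0 hTT.
  have f1 : ip (A (T z)) (T u) = 0 by rewrite Asa hu ip0r.
  have f2 : ip (A (T z)) (T (T z)) = ip (A (T z)) (T z).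
    by rewrite Asa hTT ipC (@real_ge0 _ (hpos (T z))).
  have f3 : ip (A u) (T z) = c^* by rewrite Asa ipC.
  rewrite !ipDl !ipDr !ipZl !ipZr f1 f2 f3 -/c -/d.
  ring.
have H := h (T z + s *: u).
rewrite E /s key ?hpos // in H.
have hd : 0 <= d by apply: hpos.
have hk : 0 < (d + 2) / ((d + 1) * (d + 1)).
  have hd1 : 0 < d + 1 by apply: ltr_wpDl hd ltr01.
  apply: divr_gt0; last by apply: mulr_gt0.
  have h2 : (0:C) < 2 by rewrite ltr0n.
  exact: ltr_wpDl hd h2.
rewrite oppr_ge0 pmulr_lle0 // in H.
have : c * c^* == 0 by rewrite eq_le H mul_conjC_ge0.
by rewrite mul_conjC_eq0 => /eqP.
Qed.


Lemma all_equiv : [/\ P1 <-> P2, P2 <-> P3 & P3 <-> P1].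
Proof.
split; split.
- exact: p12.
- exact: p21.
- exact: p23.
- exact: p32.
- by move=> h; apply: p21; apply: p32.
- by move=> h; apply: p23; apply: p12.
Qed.
End Gen.

Theorem mainTheorem4 (R : realType) (V : lmodType R[i]) (ip : V -> V -> R[i])
    (A T Ts : {linear V -> V}) :
  separable_hilbert ip ->
  bounded_op ip A -> positive_op ip A ->
  bounded_op ip T -> bounded_op ip Ts -> is_adjoint ip T Ts ->
  (forall x, A (T (T x)) = A (T x)) ->
  [/\ ((forall x, A (T x) = Ts (A x)) <->
        (forall y, op_range (fun x => x - T x) y ->
                   orth ip (op_range (fun x => A (T x))) y)),
      ((forall y, op_range (fun x => x - T x) y ->
                  orth ip (op_range (fun x => A (T x))) y) <->
        op_le ip (fun x => Ts (A (T x))) A)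
    & (op_le ip (fun x => Ts (A (T x))) A <-> (forall x, A (T x) = Ts (A x)))].
Proof.
move=> [[ipL ipC ipP ipD] _ _] _ hpos _ _ hadj hTT.
have [e12 e23 e31] := @all_equiv _ V ip ipL ipC ipD A T Ts hpos hadj hTT.
have eq2 : (forall y, op_range (fun x => x - T x) y ->
                   orth ip (op_range (fun x => A (T x))) y) <-> @P2 _ V ip A T.
  split.
  - by move=> h w x; apply: (h _ (ex_intro _ x erefl) _ (ex_intro _ w erefl)).
  - by move=> h y [x ->] z [w ->]; apply: h.
move: e12 e23 e31; rewrite /P1 /P3 /op_le => e12 e23 e31.
split; split.
- by move=> h; apply/eq2; apply/e12.
- by move=> h; apply/e12; apply/eq2.
- by move=> h x; apply: (proj1 e23); apply/eq2.
- by move=> h; apply/eq2; apply/e23.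
- by move=> h; apply/e31.
- by move=> h; apply/e31.
Qed.
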